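(* Let $\gamma$ be a cover-preserving join-congruence of the square grid $G$ such that $(c_{i-1},c_i)\notin\gamma$ and $(d_{i-1},d_i)\notin\gamma$ for all $i\in\{1,\dots,n\}$. Then $\gamma=\bigvee_{B}\mathrm{con}(B)$, where $B$ ranges over the source cells of $\gamma$, $\mathrm{con}(B)$ is the smallest join-congruence of $G$ collapsing the two upper edges of $B$, and the join is taken in the lattice of join-congruences of $(G;\vee)$.
   Context: $G$ is the direct product of chains $0=c_0\prec\dots\prec c_n$ and $0=d_0\prec\dots\prec d_n$, its elements written uniquely as $c_i\vee d_j$. A join-congruence is an equivalence relation compatible with $\vee$; it is cover-preserving if it is the kernel of a join-homomorphism $\varphi$ with $x\prec y\Rightarrow\varphi(x)\preceq\varphi(y)$. For $i,j\ge1$ the 4-cell with top $c_i\vee d_j$ is $B=\{c_{i-1}\vee d_{j-1},c_{i-1}\vee d_j,c_i\vee d_{j-1},c_i\vee d_j\}$, with upper edges $[c_{i-1}\vee d_j,c_i\vee d_j]$ and $[c_i\vee d_{j-1},c_i\vee d_j]$; $B$ is a source cell of $\gamma$ if $c_{i-1}\vee d_j$, $c_i\vee d_{j-1}$, $c_i\vee d_j$ lie in one $\gamma$-class not containing $c_{i-1}\vee d_{j-1}$. *)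

(* Defs.v *)
From HB Require Import structures.
From mathcomp Require Import all_boot all_order.
Set Implicit Arguments. Unset Strict Implicit. Unset Printing Implicit Defensive.
Import Order.TTheory.

(* The square grid G = C_n x C_n, element c_i \/ d_j represented by (i, j). *)
Definition grid (n : nat) : finType := ('I_n.+1 * 'I_n.+1)%type.

Definition cd (n i j : nat) : grid n := (inord i, inord j).
Arguments cd : clear implicits.

Definition gjoin (n : nat) (x y : grid n) : grid n :=
  (inord (maxn x.1 y.1), inord (maxn x.2 y.2)).

Definition gle (n : nat) (x y : grid n) : Prop := (x.1 <= y.1)%N /\ (x.2 <= y.2)%N.

Definition covers (T : Type) (le : T -> T -> Prop) (x y : T) : Prop :=
  le x y /\ x <> y /\ (forall z, le x z -> le z y -> z = x \/ z = y).

Definition covers_or_eq (T : Type) (le : T -> T -> Prop) (x y : T) : Prop :=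
  covers le x y \/ x = y.

Definition is_join_cong (n : nat) (g : grid n -> grid n -> Prop) : Prop :=
  (forall x, g x x) /\ (forall x y, g x y -> g y x) /\
  (forall x y z, g x y -> g y z -> g x z) /\
  (forall x y z, g x y -> g (gjoin x z) (gjoin y z)).

Definition cover_preserving (n : nat) (g : grid n -> grid n -> Prop) : Prop :=
  exists (disp : Order.disp_t) (L : joinSemilatticeType disp) (phi : grid n -> L),
    (forall x y, phi (gjoin x y) = Order.join (phi x) (phi y)) /\
    (forall x y, g x y <-> phi x = phi y) /\
    (forall x y, covers (@gle n) x y ->
                 covers_or_eq (fun a b : L => (a <= b)%O) (phi x) (phi y)).

Definition gen_cong (n : nat) (R : grid n -> grid n -> Prop) : grid n -> grid n -> Prop :=
  fun x y => forall th, is_join_cong th -> (forall a b, R a b -> th a b) -> th x y.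

(* the two upper edges of the 4-cell with top c_i \/ d_j *)
Definition upper_edges (n i j : nat) (x y : grid n) : Prop :=
  (x = cd n i.-1 j /\ y = cd n i j) \/ (x = cd n i j.-1 /\ y = cd n i j).
Arguments upper_edges : clear implicits.

Definition con_cell (n i j : nat) : grid n -> grid n -> Prop :=
  gen_cong (upper_edges n i j).
Arguments con_cell : clear implicits.

Definition source_cell (n : nat) (g : grid n -> grid n -> Prop) (i j : nat) : Prop :=
  [/\ (1 <= i <= n)%N, (1 <= j <= n)%N,
      g (cd n i.-1 j) (cd n i j), g (cd n i j.-1) (cd n i j)
    & ~ g (cd n i.-1 j.-1) (cd n i j)].

Definition join_source_cons (n : nat) (g : grid n -> grid n -> Prop) :
  grid n -> grid n -> Prop :=
  gen_cong (fun x y => exists i j, @source_cell n g i j /\ con_cell n i j x y).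

(* Main.v *)
Require Import Defs.
From mathcomp Require Import all_boot all_order.
From mathcomp Require Import zify.
Import Order.TTheory.

Lemma gen_cong_jc n (R : grid n -> grid n -> Prop) : is_join_cong (gen_cong R).
Proof.
split; [|split; [|split]].
- move=> x th [Hr _] _; exact: Hr.
- move=> x y H th Hth HR; case: (Hth) => _ [Hs _]; apply: Hs; exact: H.
- move=> x y z H1 H2 th Hth HR; case: (Hth) => _ [_ [Ht _]].
  exact: Ht (H1 th Hth HR) (H2 th Hth HR).
- move=> x y z H th Hth HR; case: (Hth) => _ [_ [_ Hj]]; apply: Hj; exact: H.
Qed.

Lemma gen_cong_R n (R : grid n -> grid n -> Prop) x y : R x y -> gen_cong R x y.
Proof. by move=> H th _ HR; apply: HR. Qed.

Lemma gen_cong_min n (R th : grid n -> grid n -> Prop) :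
  is_join_cong th -> (forall a b, R a b -> th a b) -> forall x y, gen_cong R x y -> th x y.
Proof. by move=> Hth HR x y H; apply: H. Qed.

Lemma cd_val n (x : grid n) : x = cd n x.1 x.2.
Proof. case: x => a b; rewrite /cd /=; by rewrite !inord_val. Qed.

Lemma cd_inj n a b c d : a <= n -> b <= n -> c <= n -> d <= n ->
  cd n a b = cd n c d -> a = c /\ b = d.
Proof.
move=> ha hb hc hd [] /(congr1 val) e1 /(congr1 val) e2.
move: e1 e2; rewrite /= !inordK; lia.
Qed.

Lemma gjoin_cd2 n a b c d p q : a <= n -> b <= n -> c <= n -> d <= n ->
  maxn a c = p -> maxn b d = q ->
  gjoin (cd n a b) (cd n c d) = cd n p q.
Proof. move=> ha hb hc hd <- <-; rewrite /gjoin /cd /= !inordK //; lia. Qed.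

Lemma cov1 n a b : a < n -> b <= n -> covers (@gle n) (cd n a b) (cd n a.+1 b).
Proof.
move=> ha hb; split; [|split].
- rewrite /gle /cd /= !inordK; lia.
- move=> E; have [] := @cd_inj n a b a.+1 b ltac:(lia) ltac:(lia) ltac:(lia) ltac:(lia) E; lia.
- case=> z1 z2 [h1 h2] [h3 h4]; rewrite /cd /= !inordK in h1 h2 h3 h4; try lia.
  rewrite (cd_val _ (z1, z2)) /=.
  have e2 : nat_of_ord z2 = b by lia.
  have [e|e] : nat_of_ord z1 = a \/ nat_of_ord z1 = a.+1 by lia.
  + by left; rewrite e e2.
  + by right; rewrite e e2.
Qed.

Lemma cov2 n a b : a <= n -> b < n -> covers (@gle n) (cd n a b) (cd n a b.+1).
Proof.
move=> ha hb; split; [|split].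
- rewrite /gle /cd /= !inordK; lia.
- move=> E; have [] := @cd_inj n a b a b.+1 ltac:(lia) ltac:(lia) ltac:(lia) ltac:(lia) E; lia.
- case=> z1 z2 [h1 h2] [h3 h4]; rewrite /cd /= !inordK in h1 h2 h3 h4; try lia.
  rewrite (cd_val _ (z1, z2)) /=.
  have e1 : nat_of_ord z1 = a by lia.
  have [e|e] : nat_of_ord z2 = b \/ nat_of_ord z2 = b.+1 by lia.
  + by left; rewrite e e1.
  + by right; rewrite e e1.
Qed.

Lemma cellL (d : Order.disp_t) (L : joinSemilatticeType d) (pa pb pc pt : L) :
  pt = Order.join pb pc -> (pa <= pb)%O -> (pa <= pc)%O ->
  covers_or_eq (fun a b : L => (a <= b)%O) pa pc -> pa <> pb -> pc = pt ->
  pb = pc /\ pa <> pc.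
Proof.
move=> Ht hab hac [[_ [_ H]]|E] nab Ect.
- have hbc : (pb <= pc)%O by rewrite Ect Ht leUl.
  split.
  + by case: (H pb hab hbc) => // E; case: nab.
  + move=> E; apply: nab; apply/eqP; rewrite eq_le hab /=.
    by rewrite E Ect Ht leUl.
- exfalso; apply: nab; apply/eqP; rewrite eq_le hab /=.
  by rewrite E Ect Ht leUl.
Qed.

Lemma cell_source n (g : grid n -> grid n -> Prop) (d : Order.disp_t)
  (L : joinSemilatticeType d) (phi : grid n -> L) :
  (forall x y, phi (gjoin x y) = Order.join (phi x) (phi y)) ->
  (forall x y, g x y <-> phi x = phi y) ->
  (forall x y, covers (@gle n) x y ->
     covers_or_eq (fun a b : L => (a <= b)%O) (phi x) (phi y)) ->
  forall i j, (1 <= i <= n)%N -> (1 <= j <= n)%N ->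
  (g (cd n i.-1 j) (cd n i j) /\ ~ g (cd n i.-1 j.-1) (cd n i j.-1) \/
   g (cd n i j.-1) (cd n i j) /\ ~ g (cd n i.-1 j.-1) (cd n i.-1 j)) ->
  source_cell g i j.
Proof.
move=> Hj Hk Hc i j hi hj H.
have leAB : (phi (cd n i.-1 j.-1) <= phi (cd n i j.-1))%O.
  have <- : gjoin (cd n i.-1 j.-1) (cd n i j.-1) = cd n i j.-1 by apply: gjoin_cd2; lia.
  by rewrite Hj leUl.
have leAC : (phi (cd n i.-1 j.-1) <= phi (cd n i.-1 j))%O.
  have <- : gjoin (cd n i.-1 j.-1) (cd n i.-1 j) = cd n i.-1 j by apply: gjoin_cd2; lia.
  by rewrite Hj leUl.
have TBC : phi (cd n i j) = Order.join (phi (cd n i j.-1)) (phi (cd n i.-1 j)).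
  by rewrite -Hj (@gjoin_cd2 n i j.-1 i.-1 j i j) //; lia.
have TCB : phi (cd n i j) = Order.join (phi (cd n i.-1 j)) (phi (cd n i j.-1)).
  by rewrite -Hj (@gjoin_cd2 n i.-1 j i j.-1 i j) //; lia.
have cAC : covers (@gle n) (cd n i.-1 j.-1) (cd n i.-1 j).
  have := @cov2 n i.-1 j.-1 ltac:(lia) ltac:(lia).
  by rewrite prednK //; lia.
have cAB : covers (@gle n) (cd n i.-1 j.-1) (cd n i j.-1).
  have := @cov1 n i.-1 j.-1 ltac:(lia) ltac:(lia).
  by rewrite prednK //; lia.
case: H => [[hCT nAB]|[hBT nAC]].
- move/Hk: hCT => hCT.
  have nAB' : phi (cd n i.-1 j.-1) <> phi (cd n i j.-1) by move=> E; apply: nAB; apply/Hk.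
  have [eBC nAC] := cellL _ _ _ _ _ _ TBC leAB leAC (Hc _ _ cAC) nAB' hCT.
  split => //; first by apply/Hk.
  + by apply/Hk; rewrite eBC.
  + by move/Hk => E; apply: nAC; rewrite E.
- move/Hk: hBT => hBT.
  have nAC' : phi (cd n i.-1 j.-1) <> phi (cd n i.-1 j) by move=> E; apply: nAC; apply/Hk.
  have [eCB nAB] := cellL _ _ _ _ _ _ TCB leAC leAB (Hc _ _ cAB) nAC' hBT.
  split => //; last by move/Hk => E; apply: nAB; rewrite E.
  + by apply/Hk; rewrite eCB.
  + by apply/Hk.
Qed.

Theorem lemma4p7 (n : nat) (g : grid n -> grid n -> Prop) :
  is_join_cong g -> cover_preserving g ->
  (forall i, (1 <= i <= n)%N -> ~ g (cd n i.-1 0) (cd n i 0)) ->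
  (forall i, (1 <= i <= n)%N -> ~ g (cd n 0 i.-1) (cd n 0 i)) ->
  forall x y, g x y <-> @join_source_cons n g x y.
Proof.
move=> Hg [d [L [phi [Hj [Hk Hc]]]]] H1 H2.
have CS := cell_source _ _ _ _ _ Hj Hk Hc.
set D := @join_source_cons n g.
have DJ : is_join_cong D := gen_cong_jc _ _.
case: (DJ) => Dr [Ds [Dt Dj]].
case: (Hg) => gr [gs [gt gj]].
have Dsrc : forall i j, source_cell g i j ->
    D (cd n i.-1 j) (cd n i j) /\ D (cd n i j.-1) (cd n i j).
  move=> i j hs; split; apply: gen_cong_R; exists i, j; split=> //;
    apply: gen_cong_R; [left|right]; split; reflexivity.
move=> x y; split; last first.
  apply: (gen_cong_min _ _ _ Hg) => a b [i [j [hs hc]]].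
  apply: (gen_cong_min _ _ _ Hg _ _ _ hc) => u v [[-> ->]|[-> ->]]; by case: hs.
have EH : forall j, j <= n -> forall i, 1 <= i <= n ->
    g (cd n i.-1 j) (cd n i j) -> D (cd n i.-1 j) (cd n i j).
  elim=> [|j IH] hj i hi hg; first by case: (H1 i hi).
  case: (eqVneq (phi (cd n i.-1 j)) (phi (cd n i j))) => E.
  - have := Dj _ _ (cd n i.-1 j.+1) (IH ltac:(lia) i hi (proj2 (Hk _ _) E)).
    rewrite (@gjoin_cd2 n i.-1 j i.-1 j.+1 i.-1 j.+1); try lia.
    rewrite (@gjoin_cd2 n i j i.-1 j.+1 i j.+1); try lia.
    done.
  - have hs : source_cell g i j.+1.
      apply: CS; try lia.
      by left; split => // /Hk F; rewrite F eqxx in E.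
    exact: (Dsrc _ _ hs).1.
have EV : forall i, i <= n -> forall j, 1 <= j <= n ->
    g (cd n i j.-1) (cd n i j) -> D (cd n i j.-1) (cd n i j).
  elim=> [|i IH] hi j hj hg; first by case: (H2 j hj).
  case: (eqVneq (phi (cd n i j.-1)) (phi (cd n i j))) => E.
  - have := Dj _ _ (cd n i.+1 j.-1) (IH ltac:(lia) j hj (proj2 (Hk _ _) E)).
    rewrite (@gjoin_cd2 n i j.-1 i.+1 j.-1 i.+1 j.-1); try lia.
    rewrite (@gjoin_cd2 n i j i.+1 j.-1 i.+1 j); try lia.
    done.
  - have hs : source_cell g i.+1 j.
      apply: CS; try lia.
      by right; split => // /Hk F; rewrite F eqxx in E.
    exact: (Dsrc _ _ hs).2.
have P : forall k a b c e, a <= c <= n -> b <= e <= n -> (c - a) + (e - b) = k ->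
    g (cd n a b) (cd n c e) -> D (cd n a b) (cd n c e).
  elim=> [|k IH] a b c e hac hbe hk hg.
    have -> : c = a by lia.
    have -> : e = b by lia.
    exact: Dr.
  case: (ltnP a c) => hlt.
  - have hw : g (cd n a.+1 b) (cd n c e).
      have := gj _ _ (cd n a.+1 b) hg.
      rewrite (@gjoin_cd2 n a b a.+1 b a.+1 b); try lia.
      rewrite (@gjoin_cd2 n c e a.+1 b c e); try lia.
      done.
    have hx : g (cd n a b) (cd n a.+1 b) by apply: gt hg (gs _ _ hw).
    apply: Dt (IH a.+1 b c e _ _ _ hw); try lia.
    exact: (EH b ltac:(lia) a.+1 ltac:(lia) hx).
  - have hw : g (cd n a b.+1) (cd n c e).
      have := gj _ _ (cd n a b.+1) hg.
      rewrite (@gjoin_cd2 n a b a b.+1 a b.+1); try lia.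
      rewrite (@gjoin_cd2 n c e a b.+1 c e); try lia.
      done.
    have hx : g (cd n a b) (cd n a b.+1) by apply: gt hg (gs _ _ hw).
    apply: Dt (IH a b.+1 c e _ _ _ hw); try lia.
    exact: (EV a ltac:(lia) b.+1 ltac:(lia) hx).
case: x => x1 x2; case: y => y1 y2 hxy.
rewrite (cd_val _ (x1, x2)) (cd_val _ (y1, y2)) /= in hxy *.
have l1 := leq_ord x1; have l2 := leq_ord x2; have l3 := leq_ord y1; have l4 := leq_ord y2.
have hx : g (cd n x1 x2) (cd n (maxn x1 y1) (maxn x2 y2)).
  have := gj _ _ (cd n x1 x2) hxy.
  rewrite (@gjoin_cd2 n x1 x2 x1 x2 x1 x2); try lia.
  rewrite (@gjoin_cd2 n y1 y2 x1 x2 (maxn x1 y1) (maxn x2 y2)); try lia.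
  done.
have hy : g (cd n (maxn x1 y1) (maxn x2 y2)) (cd n y1 y2).
  have := gj _ _ (cd n y1 y2) hxy.
  rewrite (@gjoin_cd2 n x1 x2 y1 y2 (maxn x1 y1) (maxn x2 y2)); try lia.
  rewrite (@gjoin_cd2 n y1 y2 y1 y2 y1 y2); try lia.
  done.
have m1 : x1 <= maxn x1 y1 <= n by lia.
have m2 : x2 <= maxn x2 y2 <= n by lia.
have m3 : y1 <= maxn x1 y1 <= n by lia.
have m4 : y2 <= maxn x2 y2 <= n by lia.
have D1 := P _ x1 x2 (maxn x1 y1) (maxn x2 y2) m1 m2 erefl hx.
have D2 := P _ y1 y2 (maxn x1 y1) (maxn x2 y2) m3 m4 erefl (gs _ _ hy).
exact: (Dt _ _ _ D1 (Ds _ _ D2)).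
Qed.
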